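(* Let $P$ be a generic regular hexagon in $\mathbb{R}^3$, $u_1,\ldots,u_6$ a support system of $P$, and $P'=B_1\ldots B_6$ the derived hexagon, $\overline{OB_i}=u_i$. Assume $B_1,B_3,B_5$ are not collinear and let $\Pi_1$ be the plane through them. Then $B_2,B_4,B_6$ lie in one open half-space (or all on $\Pi_1$) at equal distance from $\Pi_1$, so they lie in a plane $\Pi_2$ parallel to $\Pi_1$ (or equal to it). Moreover, if $B'_2,B'_4,B'_6$ denote the orthogonal projections of $B_2,B_4,B_6$ onto $\Pi_1$, then the plane hexagon $B_1B'_2B_3B'_4B_5B'_6$ has oriented area $0$.
   Context: Indices are cyclic mod $6$; $[\cdot,\cdot]$ is the cross product. For a closed hexagon $A_1\ldots A_6$ put $v_1=\overline{A_1A_2},\ldots,v_6=\overline{A_6A_1}$. The hexagon is generic if any two consecutive $v_i,v_{i+1}$ are not collinear and any three consecutive $v_i,v_{i+1},v_{i+2}$ are not coplanar. A support system is a tuple $u_1,\ldots,u_6$ with $[u_i,u_{i+1}]=v_{i+1}$ for all $i$; a generic hexagon is regular if it has a support system. The derived hexagon for a support system is $B_1\ldots B_6$ with $\overline{OB_i}=u_i$ for a fixed origin $O$. A closed polygon $C_1\ldots C_n$ has oriented area $0$ if $\sum_i[\overline{OC_i},\overline{OC_{i+1}}]=0$ (independent of $O$); for a plane polygon this means its signed area in its plane is zero. *)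

(* Defs.v *)
From HB Require Import structures.
From mathcomp Require Import all_boot all_order all_algebra.
Set Implicit Arguments. Unset Strict Implicit. Unset Printing Implicit Defensive.
Import Order.TTheory GRing.Theory Num.Theory.
Local Open Scope ring_scope.

Notation vec R := 'rV[R]_3.

Notation nxt := (@ordS _).

Definition cross {R : comNzRingType} (u v : vec R) : vec R :=
  \row_(k < 3) (u 0 (nxt k) * v 0 (nxt (nxt k)) - u 0 (nxt (nxt k)) * v 0 (nxt k)).

Definition dot {R : comNzRingType} (u v : vec R) : R := \sum_(k < 3) u 0 k * v 0 k.

(* a closed hexagon is given by its vertices A_1..A_6, indexed by 'I_6 (A_1 = A 0) *)
Definition hexagon (R : comNzRingType) := 'I_6 -> vec R.

Definition sides {R : comNzRingType} (A : hexagon R) (i : 'I_6) : vec R :=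
  A (nxt i) - A i.

Definition generic {R : comNzRingType} (A : hexagon R) : Prop :=
  (forall i, cross (sides A i) (sides A (nxt i)) != 0) /\
  (forall i, dot (sides A i) (cross (sides A (nxt i)) (sides A (nxt (nxt i)))) != 0).

Definition support_system {R : comNzRingType} (A : hexagon R) (u : 'I_6 -> vec R) : Prop :=
  forall i, cross (u i) (u (nxt i)) = sides A (nxt i).

Definition regular {R : comNzRingType} (A : hexagon R) : Prop :=
  generic A /\ exists u, support_system A u.

Definition derived {R : comNzRingType} (O : vec R) (u : 'I_6 -> vec R) : hexagon R :=
  fun i => O + u i.

(* oriented area zero of a closed n-gon: sum_i [O C_i, O C_{i+1}] = 0, with O the origin *)
Definition oriented_area_zero {R : comNzRingType} {n : nat} (C : 'I_n -> vec R) : Prop :=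
  \sum_(i < n) cross (C i) (C (nxt i)) = 0.

(* orthogonal projection of X onto the plane through P with normal n0 (n0 != 0) *)
Definition proj_plane {R : fieldType} (P n0 X : vec R) : vec R :=
  X - (dot (X - P) n0 / dot n0 n0) *: n0.

(* signed distance of X from the plane through P with normal n0, up to the
   positive factor 1/|n0| (same sign <=> same open half-space) *)
Definition sdist {R : comNzRingType} (P n0 X : vec R) : R := dot (X - P) n0.

(* Main.v *)
Require Import Defs.
From HB Require Import structures.
From mathcomp Require Import all_boot all_order all_algebra.
From mathcomp Require Import ring.
Import Order.TTheory GRing.Theory Num.Theory.
Local Open Scope ring_scope.

Section Aux.
Variable R : comNzRingType.

Definition mk (a b c : R) : vec R := \row_(k < 3) [:: a; b; c]`_k.

Lemma vecE (v : vec R) : v = mk (v 0 (inord 0)) (v 0 (inord 1)) (v 0 (inord 2)).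
Proof.
apply/rowP => k; rewrite !mxE.
case: k => [[|[|[|k]]] Hk] //=; congr (v _ _); apply/val_inj; by rewrite /= inordK.
Qed.

Lemma cross_mk a b c d e f :
  cross (mk a b c) (mk d e f) = mk (b*f - c*e) (c*d - a*f) (a*e - b*d).
Proof.
apply/rowP => k; rewrite !mxE.
case: k => [[|[|[|k]]] Hk] //=; rewrite !mxE /=; ring.
Qed.

Lemma dot_mk a b c d e f : dot (mk a b c) (mk d e f) = a*d + b*e + c*f.
Proof. by rewrite /dot !big_ord_recr big_ord0 /= !mxE /= add0r. Qed.

Lemma add_mk a b c d e f : mk a b c + mk d e f = mk (a+d) (b+e) (c+f).
Proof. by apply/rowP => k; rewrite !mxE; case: k => [[|[|[|k]]] Hk]. Qed.

Lemma opp_mk a b c : - mk a b c = mk (-a) (-b) (-c).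
Proof. by apply/rowP => k; rewrite !mxE; case: k => [[|[|[|k]]] Hk]. Qed.

Lemma scale_mk s a b c : s *: mk a b c = mk (s*a) (s*b) (s*c).
Proof. by apply/rowP => k; rewrite !mxE; case: k => [[|[|[|k]]] Hk]. Qed.

Lemma mk_eq a b c d e f : a = d -> b = e -> c = f -> mk a b c = mk d e f.
Proof. by move=> -> -> ->. Qed.

Lemma sum6 (V : zmodType) (F : 'I_6 -> V) :
  \sum_(i < 6) F i = F (inord 0) + F (inord 1) + F (inord 2) + F (inord 3)
                     + F (inord 4) + F (inord 5).
Proof.
rewrite (eq_bigr (fun i : 'I_6 => F (inord (val i)))); last by move=> i _; rewrite inord_val.
rewrite -(big_mkord xpredT (fun k => F (inord k))).
by rewrite /index_iota /= !big_cons big_nil addr0 !addrA.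
Qed.

Lemma nxt6 (k : nat) : (k < 6)%N -> nxt (inord k : 'I_6) = inord (k.+1 %% 6)%N.
Proof.
move=> Hk; apply/val_inj; rewrite /= !inordK //; by rewrite ltn_mod.
Qed.

Lemma mkP (v : vec R) : exists a b c, v = mk a b c.
Proof. by exists (v 0 (inord 0)), (v 0 (inord 1)), (v 0 (inord 2)); apply: vecE. Qed.

Lemma zero_mk : (0 : vec R) = mk 0 0 0.
Proof. by apply/rowP => k; rewrite !mxE; case: k => [[|[|[|k]]] Hk]. Qed.

Lemma dot0 (v : vec R) : dot 0 v = 0.
Proof. by rewrite /dot big1 // => i _; rewrite mxE mul0r. Qed.

Definition Ssum (u0 u1 u2 u3 u4 u5 : vec R) :=
  cross u0 u1 + cross u1 u2 + cross u2 u3 + cross u3 u4 + cross u4 u5 + cross u5 u0.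

Ltac crush :=
  repeat match goal with
  | v : matrix _ 1 3 |- _ => let a := fresh "a" in let b := fresh "b" in let c := fresh "c" in
      case: (mkP v) => [a [b [c ->]]]; clear v
  end;
  rewrite /Ssum ?zero_mk ?(opp_mk, add_mk, cross_mk, dot_mk, scale_mk).

Lemma key1 (O u0 u1 u2 u3 u4 u5 : vec R) :
  let n0 := cross ((O+u2) - (O+u0)) ((O+u4) - (O+u0)) in
  dot ((O+u1) - (O+u0)) n0 - dot ((O+u3) - (O+u0)) n0
  = dot (Ssum u0 u1 u2 u3 u4 u5) (u4 - u0).
Proof. move=> n0; rewrite /n0; clear n0; crush; ring. Qed.

Lemma key2 (O u0 u1 u2 u3 u4 u5 : vec R) :
  let n0 := cross ((O+u2) - (O+u0)) ((O+u4) - (O+u0)) in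
  dot ((O+u1) - (O+u0)) n0 - dot ((O+u5) - (O+u0)) n0
  = dot (Ssum u0 u1 u2 u3 u4 u5) (u4 - u2).
Proof. move=> n0; rewrite /n0; clear n0; crush; ring. Qed.

Lemma key3 (O u0 u1 u2 u3 u4 u5 : vec R) (c : R) :
  let n0 := cross ((O+u2) - (O+u0)) ((O+u4) - (O+u0)) in
  cross (O+u0) ((O+u1) - c *: n0) + cross ((O+u1) - c *: n0) (O+u2)
  + cross (O+u2) ((O+u3) - c *: n0) + cross ((O+u3) - c *: n0) (O+u4)
  + cross (O+u4) ((O+u5) - c *: n0) + cross ((O+u5) - c *: n0) (O+u0)
  = Ssum u0 u1 u2 u3 u4 u5.
Proof. move=> n0; rewrite /n0; clear n0; crush; apply: mk_eq; ring. Qed.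

End Aux.
Arguments Ssum {R}.

Lemma closure (R : comNzRingType) (A : hexagon R) (u : 'I_6 -> vec R) :
  support_system A u ->
  Ssum (u (inord 0)) (u (inord 1)) (u (inord 2)) (u (inord 3)) (u (inord 4)) (u (inord 5)) = 0.
Proof.
move=> Hs.
have H1 : \sum_(i < 6) sides A i = 0.
  rewrite /sides sumrB [X in _ - X](reindex_inj (@ordS_inj 6)) subrr //.
have H2 : \sum_(i < 6) cross (u i) (u (nxt i)) = 0.
  rewrite (eq_bigr (fun i => sides A (nxt i))); last by move=> i _; rewrite Hs.
  by apply: etrans H1; rewrite [RHS](reindex_inj (@ordS_inj 6)).
move: H2; rewrite sum6 !nxt6 //= => <-.
Qed.

Theorem theorem5p3 (R : realFieldType) (A : hexagon R) (u : 'I_6 -> vec R) (O : vec R) :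
  regular A -> support_system A u ->
  let B := derived O u in
  let n0 := cross (B (inord 2) - B (inord 0)) (B (inord 4) - B (inord 0)) in
  n0 != 0 ->
  (sdist (B (inord 0)) n0 (B (inord 1)) = sdist (B (inord 0)) n0 (B (inord 3)) /\
   sdist (B (inord 0)) n0 (B (inord 3)) = sdist (B (inord 0)) n0 (B (inord 5))) /\
  oriented_area_zero
    (fun i : 'I_6 => if odd i then proj_plane (B (inord 0)) n0 (B i) else B i).
Proof.
move=> _ Hs B n0 _.
have Hc := @closure R A u Hs.
have E3 : sdist (B (inord 0)) n0 (B (inord 1)) = sdist (B (inord 0)) n0 (B (inord 3)).
  apply/eqP; rewrite -subr_eq0; apply/eqP.
  by rewrite /sdist /n0 /B /derived (key1 _ _ _ _ _ _ _ (u (inord 5))) Hc dot0.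
have E5 : sdist (B (inord 0)) n0 (B (inord 1)) = sdist (B (inord 0)) n0 (B (inord 5)).
  apply/eqP; rewrite -subr_eq0; apply/eqP.
  by rewrite /sdist /n0 /B /derived (key2 _ _ _ _ _ (u (inord 3))) Hc dot0.
split; first by split; rewrite -?E3.
rewrite /oriented_area_zero sum6 !nxt6 //= !inordK //=.
rewrite /proj_plane -!/(sdist _ _ _) -E3 -E5.
rewrite -Hc -(@key3 _ O _ _ _ _ _ _ (sdist (B (inord 0)) n0 (B (inord 1)) / dot n0 n0)).
by [].
Qed.
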